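(* Let $p_1,\dots,p_n>0$ with $\sum_i p_i=1$, let $c_1,\dots,c_n\in[-1,1]$, put $\bar c=\sum_i p_i c_i$, and fix $\Delta>0$. For $g\ge 0$ define $$I_a(g)=H_B\!\left(\frac{1+\sqrt{\bar c^{\,2}+(1-\bar c^{\,2})e^{-g^2/\Delta^2}}}{2}\right)-\sum_{i=1}^n p_i\,H_B\!\left(\frac{1+\sqrt{c_i^{2}+(1-c_i^{2})e^{-g^2/\Delta^2}}}{2}\right).$$ Then $I_a(g)$ is a monotonically non-decreasing function of $g$ on $[0,\infty)$.
   Context: $H_B(\lambda)=-\lambda\log_2\lambda-(1-\lambda)\log_2(1-\lambda)$ is the binary Shannon entropy (with $0\log 0=0$). Physical meaning: an ensemble of qubit states $\rho_i=\tfrac12\big(I+r_i(\sin\theta_i\cos\phi_i\,\sigma_x+\sin\theta_i\sin\phi_i\,\sigma_y+\cos\theta_i\,\sigma_z)\big)$, $0\le r_i\le1$, sent with probabilities $p_i$, is measured by a device with initial Gaussian wavefunction $\Phi(q)=(2\pi\Delta^2)^{-1/4}e^{-q^2/(4\Delta^2)}$ via the unitary $e^{-ig\sigma_z\otimes p}$ ($p$ the momentum operator of the device); with $c_i=r_i\cos\theta_i$, $I_a(g)=S(\rho'_D)-\sum_ip_iS(\rho'_{iD})$ is the information gain (Holevo quantity of the device states), where $\rho'_{iD}$ is the device state after interaction with $\rho_i$ and $\rho'_D=\sum_ip_i\rho'_{iD}$. *)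

(* Defs.v *)
From Stdlib Require Import Reals Lra.
Open Scope R_scope.

Fixpoint sumR (n : nat) (f : nat -> R) : R :=
  match n with
  | O => 0
  | S m => sumR m f + f m
  end.

Definition log2 (x : R) : R := ln x / ln 2.

Definition xlog2x (x : R) : R := if Req_EM_T x 0 then 0 else x * log2 x.
Definition H_B (l : R) : R := - xlog2x l - xlog2x (1 - l).

(* argument of H_B for a qubit with z-Bloch component c *)
Definition Ia_arg (Delta g c : R) : R :=
  (1 + sqrt (c ^ 2 + (1 - c ^ 2) * exp (- g ^ 2 / Delta ^ 2))) / 2.

Definition Ia (n : nat) (p c : nat -> R) (Delta g : R) : R :=
  let cbar := sumR n (fun i => p i * c i) in
  H_B (Ia_arg Delta g cbar) - sumR n (fun i => p i * H_B (Ia_arg Delta g (c i))).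

(* Main.v *)
Require Import Defs.
From Coquelicot Require Import Coquelicot.
From Stdlib Require Import Reals Lra.
Open Scope R_scope.
Definition xl (x : R) : R := x * ln x.


Lemma ln_le_lin (z : R) : 0 < z -> ln z <= z - 1.
Proof.
  intros Hz.
  assert (H : z <= exp (z - 1)).
  { destruct (Req_dec (z-1) 0) as [E|E].
    - rewrite E, exp_0; lra.
    - generalize (exp_ineq1 (z-1) E); lra. }
  rewrite <- (ln_exp (z-1)). now apply ln_le.
Qed.

Lemma ln_nonpos x : ~ 0 < x -> ln x = 0.
Proof. intros H. unfold ln. destruct (Rlt_dec 0 x). contradiction. reflexivity. Qed.

Lemma xl_cont0 : continuity_pt xl 0.
Proof.
  unfold continuity_pt, continue_in, limit1_in, limit_in; simpl.
  intros eps Heps.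
  exists (Rmin 1 (eps * eps / 4)). split.
  { apply Rmin_pos; nra. }
  intros x [_ Hx]. unfold R_dist in *.
  unfold xl at 2. rewrite Rmult_0_l, Rminus_0_r.
  rewrite Rminus_0_r in Hx.
  destruct (Rlt_dec 0 x) as [Hp|Hn].
  - set (s := sqrt x).
    assert (Hs : 0 < s) by (apply sqrt_lt_R0; lra).
    assert (Hss : s * s = x) by (apply sqrt_sqrt; lra).
    assert (Hx1 : x < 1) by (apply Rlt_le_trans with (1 := Rle_lt_trans _ _ _ (Rle_abs x) Hx); apply Rmin_l).
    assert (Hx2 : x < eps*eps/4) by (apply Rlt_le_trans with (1 := Rle_lt_trans _ _ _ (Rle_abs x) Hx); apply Rmin_r).
    assert (Hs1 : s < 1) by nra.
    assert (Hl : ln x = 2 * ln s).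
    { rewrite <- Hss, ln_mult by lra. ring. }
    assert (Hls : ln s < 0).
    { rewrite <- ln_1. apply ln_increasing; lra. }
    assert (Hli : ln (/ s) <= / s - 1) by (apply ln_le_lin; apply Rinv_0_lt_compat; lra).
    rewrite ln_Rinv in Hli by lra.
    assert (Hse : s < eps / 2) by nra.
    unfold xl. rewrite Hl, <- Hss.
    assert (H1: s * / s = 1) by (field; lra).
    rewrite Rabs_left; [|nra].
    nra.
  - unfold xl. replace (ln x) with 0. { rewrite Rmult_0_r, Rabs_R0. lra. } now rewrite ln_nonpos.
Qed.

Lemma ln2_pos : 0 < ln 2.
Proof. rewrite <- ln_1. apply ln_increasing; lra. Qed.

Lemma xlog2x_eq x : xlog2x x = xl x / ln 2.
Proof.
  unfold xlog2x, log2, xl. destruct (Req_EM_T x 0) as [->|_].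
  - unfold Rdiv; ring.
  - unfold Rdiv; ring.
Qed.

Definition hh (y : R) : R := H_B ((1 + sqrt (1 - y)) / 2).

Lemma hh_eq y : hh y = - xl ((1 + sqrt (1 - y)) / 2) / ln 2 - xl ((1 - sqrt (1 - y)) / 2) / ln 2.
Proof.
  unfold hh, H_B. rewrite !xlog2x_eq.
  replace (1 - (1 + sqrt (1 - y)) / 2) with ((1 - sqrt (1 - y)) / 2) by field.
  unfold Rdiv; ring.
Qed.

Definition DD (y : R) : R :=
  (ln ((1 + sqrt (1 - y)) / 2) - ln ((1 - sqrt (1 - y)) / 2)) / (4 * sqrt (1 - y) * ln 2).

Lemma hh_derive y : 0 < y < 1 -> is_derive hh y (DD y).
Proof.
  intros Hy.
  assert (Hr : 0 < sqrt (1 - y)) by (apply sqrt_lt_R0; lra).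
  assert (Hr1 : sqrt (1 - y) < 1).
  { assert (H: sqrt (1 - y) < sqrt 1) by (apply sqrt_lt_1_alt; split; lra). now rewrite sqrt_1 in H. }
  pose proof ln2_pos as Hl2.

  eapply is_derive_ext. { intros t. symmetry. apply hh_eq. }
  unfold xl.
  auto_derive.
  - replace (1 + - y) with (1 - y) by ring. repeat split; lra.
  - replace (1 + - y) with (1 - y) by ring.
  - unfold DD. replace (1 + - sqrt (1 - y)) with (1 - sqrt (1 - y)) by ring. set (r := sqrt (1 - y)) in *. set (A := ln ((1 + r) / 2)). set (B := ln ((1 - r) / 2)). set (L := ln 2) in *. change (ln ((1 + r) * / 2)) with A. change (ln ((1 - r) * / 2)) with B. field. repeat split; lra.
Qed.

Lemma cpt_of_cont f x : continuous f x -> continuity_pt f x.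
Proof. intros H. now apply continuity_pt_filterlim. Qed.

Lemma cpt_of_exd (f : R -> R) x : ex_derive f x -> continuity_pt f x.
Proof. intros H. apply cpt_of_cont. exact (ex_derive_continuous (K:=R_AbsRing) (V:=R_NormedModule) f x H). Qed.

Lemma hh_cont y : 0 <= y < 1 -> continuity_pt hh y.
Proof.
  intros Hy. destruct (Req_dec y 0) as [->|Hy0].
  - pose proof ln2_pos as Hl2.
    apply continuity_pt_ext with
      (f := fun t => - xl ((1 + sqrt (1 - t)) / 2) / ln 2 - xl ((1 - sqrt (1 - t)) / 2) / ln 2).
    { intros t. now rewrite hh_eq. }
    assert (hA : continuity_pt (fun t => - xl ((1 + sqrt (1 - t)) / 2) / ln 2) 0).
    { apply cpt_of_exd. unfold xl. auto_derive.
      replace (1 + - 0) with 1 by ring. rewrite sqrt_1. repeat split; lra. }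
    assert (hM : continuity_pt (fun t => (1 - sqrt (1 - t)) / 2) 0).
    { apply cpt_of_exd. auto_derive. 
      replace (1 + - 0) with 1 by ring. repeat split; lra. }
    assert (hX : continuity_pt (fun x => xl x / ln 2) 0).
    { apply (continuity_pt_div xl (fun _ : R => ln 2)).
      - exact xl_cont0.
      - apply continuity_pt_const. intros a b; reflexivity.
      - lra. }
    assert (hC : continuity_pt (fun t => xl ((1 - sqrt (1 - t)) / 2) / ln 2) 0).
    { apply (continuity_pt_comp (fun t => (1 - sqrt (1 - t)) / 2) (fun x => xl x / ln 2)).
      - exact hM.
      - replace ((1 - sqrt (1 - 0)) / 2) with 0. exact hX.
        rewrite Rminus_0_r, sqrt_1. field. }
    exact (continuity_pt_minus _ _ _ hA hC).
  - apply cpt_of_exd. eexists. apply hh_derive. lra.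
Qed.

Definition VV (y : R) : R :=
  y * (ln ((1 + sqrt (1 - y)) / 2) - ln ((1 - sqrt (1 - y)) / 2)) / (2 * sqrt (1 - y)).
Definition phi (y s : R) : R := y / (1 - (1 - y) * s ^ 2).

Lemma sqrt_lt1 y : 0 < y < 1 -> 0 < sqrt (1 - y) < 1.
Proof.
  intros Hy. split. apply sqrt_lt_R0; lra.
  assert (H: sqrt (1 - y) < sqrt 1) by (apply sqrt_lt_1_alt; split; lra). now rewrite sqrt_1 in H.
Qed.

Lemma VV_int y : 0 <= y < 1 -> is_RInt (phi y) 0 1 (VV y).
Proof.
  intros Hy. destruct (Req_dec y 0) as [->|Hy0].
  - replace (VV 0) with (scal (1 - 0) (0:R)).
    + apply is_RInt_ext with (f := fun _ => 0).
      { intros x _. unfold phi. exact (eq_sym (Rmult_0_l _)). }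
      exact (is_RInt_const (V:=R_NormedModule) 0 1 0).
    + assert (H0 : VV 0 = (1 - 0) * 0) by (unfold VV, Rdiv; ring). exact (eq_sym H0).
  - assert (Hy' : 0 < y < 1) by lra.
    destruct (sqrt_lt1 y Hy') as [Hr Hr1].
    assert (Hrr : sqrt (1 - y) * sqrt (1 - y) = 1 - y) by (apply sqrt_sqrt; lra).
    set (r := sqrt (1 - y)) in *.
    set (f := fun s => y * (ln ((1 + r * s) / 2) - ln ((1 - r * s) / 2)) / (2 * r)).
    replace (VV y) with (minus (f 1) (f 0)).
    + apply (is_RInt_derive (V:=R_CompleteNormedModule)).
      * intros s Hs. rewrite Rmin_left, Rmax_right in Hs by lra.
        assert (Hrs : r * s <= r) by nra.
        assert (Hrs0 : 0 <= r * s) by nra.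
        unfold f. auto_derive.
        { repeat split; lra. }
        unfold phi. rewrite <- Hrr.
        set (A := ln ((1 + r * s) / 2)). set (B := ln ((1 - r * s) / 2)).
        change (ln ((1 + r * s) * / 2)) with A. change (ln ((1 + - (r * s)) * / 2)) with B.
        field. nra.
      * intros s Hs. rewrite Rmin_left, Rmax_right in Hs by lra.
        apply (ex_derive_continuous (K:=R_AbsRing) (V:=R_NormedModule)).
        unfold phi. auto_derive. nra.
    + unfold minus, plus, opp. simpl. unfold f, VV. fold r.
      rewrite Rmult_1_r, Rmult_0_r, Rplus_0_r, Rminus_0_r. field. lra.
Qed.

Lemma sumR_le n f g : (forall i, (i < n)%nat -> f i <= g i) -> sumR n f <= sumR n g.
Proof.
  induction n as [|n IH]; intros H; simpl. lra.
  assert (H1 := H n (Nat.lt_succ_diag_r n)).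
  assert (H2 : sumR n f <= sumR n g) by (apply IH; intros i Hi; apply H; auto).
  lra.
Qed.

Lemma sumR_aff n (p x : nat -> R) A B :
  sumR n (fun i => p i * (A + B * x i)) = A * sumR n p + B * sumR n (fun i => p i * x i).
Proof. induction n as [|n IH]; simpl. ring. rewrite IH. ring. Qed.

Lemma sumR_nonneg n f : (forall i, (i < n)%nat -> 0 <= f i) -> 0 <= sumR n f.
Proof.
  intros H. apply Rle_trans with (sumR n (fun _ => 0)).
  - clear. induction n; simpl; lra.
  - now apply sumR_le.
Qed.

Lemma phi_tangent y m s : 0 < s < 1 -> 0 <= y -> 0 <= m ->
  phi y s <= (phi m s - (1 - s^2) / (1 - (1 - m) * s^2)^2 * m)
             + (1 - s^2) / (1 - (1 - m) * s^2)^2 * y.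
Proof.
  intros Hs Hy Hm. unfold phi.
  assert (HD : 0 < 1 - (1 - m) * s^2) by nra.
  assert (HE : 0 < 1 - (1 - y) * s^2) by nra.
  assert (K : m / (1 - (1 - m) * s^2) - (1 - s^2) / (1 - (1 - m) * s^2)^2 * m
     + (1 - s^2) / (1 - (1 - m) * s^2)^2 * y - y / (1 - (1 - y) * s^2)
     = (1 - s^2) * s^2 * (y - m)^2 / ((1 - (1 - m) * s^2)^2 * (1 - (1 - y) * s^2))).
  { field. split; lra. }
  assert (0 <= (1 - s^2) * s^2 * (y - m)^2 / ((1 - (1 - m) * s^2)^2 * (1 - (1 - y) * s^2))).
  { apply Rle_mult_inv_pos. apply Rmult_le_pos. apply Rmult_le_pos; nra. apply pow2_ge_0.
    apply Rmult_lt_0_compat; [apply pow_lt|]; lra. }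
  lra.
Qed.

Lemma phi_mono m y s : 0 < s < 1 -> 0 <= m <= y -> phi m s <= phi y s.
Proof.
  intros Hs Hm. unfold phi.
  assert (HD : 0 < 1 - (1 - m) * s^2) by nra.
  assert (HE : 0 < 1 - (1 - y) * s^2) by nra.
  assert (K : y / (1 - (1 - y) * s^2) - m / (1 - (1 - m) * s^2)
     = (1 - s^2) * (y - m) / ((1 - (1 - y) * s^2) * (1 - (1 - m) * s^2))).
  { field. split; lra. }
  assert (0 <= (1 - s^2) * (y - m) / ((1 - (1 - y) * s^2) * (1 - (1 - m) * s^2))).
  { apply Rle_mult_inv_pos. apply Rmult_le_pos; nra. apply Rmult_lt_0_compat; nra. }
  lra.
Qed.

Lemma jensen_phi n (p y : nat -> R) s : 0 < s < 1 ->
  (forall i, (i < n)%nat -> 0 <= p i) -> sumR n p = 1 ->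
  (forall i, (i < n)%nat -> 0 <= y i) ->
  sumR n (fun i => p i * phi (y i) s) <= phi (sumR n (fun i => p i * y i)) s.
Proof.
  intros Hs Hp Hsum Hy.
  set (m := sumR n (fun i => p i * y i)).
  assert (Hm : 0 <= m).
  { apply sumR_nonneg. intros i Hi. apply Rmult_le_pos; auto. }
  set (T := (1 - s^2) / (1 - (1 - m) * s^2)^2).
  apply Rle_trans with (sumR n (fun i => p i * ((phi m s - T * m) + T * y i))).
  - apply sumR_le. intros i Hi. apply Rmult_le_compat_l; auto. apply phi_tangent; auto.
  - rewrite sumR_aff, Hsum. fold m. lra.
Qed.

Lemma is_RInt_val (f : R -> R) a b (l l' : R) : l = l' -> is_RInt f a b l -> is_RInt f a b l'.
Proof. now intros ->. Qed.

Lemma sumR_int n (p y : nat -> R) :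
  (forall i, (i < n)%nat -> is_RInt (phi (y i)) 0 1 (VV (y i))) ->
  is_RInt (fun s => sumR n (fun i => p i * phi (y i) s)) 0 1 (sumR n (fun i => p i * VV (y i))).
Proof.
  induction n as [|n IH]; intros H.
  - apply is_RInt_val with ((1 - 0) * 0). simpl; ring.
    exact (is_RInt_const (V:=R_NormedModule) 0 1 0).
  - assert (H1 : is_RInt (phi (y n)) 0 1 (VV (y n))) by (apply H; auto).
    assert (H2 : is_RInt (fun s => sumR n (fun i => p i * phi (y i) s)) 0 1
                   (sumR n (fun i => p i * VV (y i)))) by (apply IH; intros i Hi; apply H; auto).
    exact (is_RInt_plus (V:=R_NormedModule) _ _ 0 1 _ _ H2
             (is_RInt_scal (V:=R_NormedModule) _ 0 1 (p n) _ H1)).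
Qed.

Lemma VV_jensen n (p y : nat -> R) yb :
  (forall i, (i < n)%nat -> 0 <= p i) -> sumR n p = 1 ->
  (forall i, (i < n)%nat -> 0 <= y i < 1) ->
  sumR n (fun i => p i * y i) <= yb -> yb < 1 ->
  sumR n (fun i => p i * VV (y i)) <= VV yb.
Proof.
  intros Hp Hsum Hy Hm Hyb.
  assert (Hm0 : 0 <= sumR n (fun i => p i * y i)).
  { apply sumR_nonneg. intros i Hi. apply Rmult_le_pos; [auto|apply Hy; auto]. }
  apply (is_RInt_le _ _ 0 1 _ _ (Rle_0_1) (sumR_int n p y (fun i Hi => VV_int (y i) (Hy i Hi)))
          (VV_int yb (conj (Rle_trans _ _ _ Hm0 Hm) Hyb))).
  intros s Hs.
  apply Rle_trans with (1 := jensen_phi n p y s Hs Hp Hsum (fun i Hi => proj1 (Hy i Hi))).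
  apply phi_mono; lra.
Qed.

Lemma sumR_ext n f g : (forall i, (i < n)%nat -> f i = g i) -> sumR n f = sumR n g.
Proof. intros H. apply Rle_antisym; apply sumR_le; intros i Hi; rewrite H; auto; lra. Qed.

Lemma sumR_scal n k f : k * sumR n f = sumR n (fun i => k * f i).
Proof. induction n as [|n IH]; simpl. ring. rewrite <- IH. ring. Qed.

Lemma is_derive_val (f : R -> R) x (l l' : R) : l = l' -> is_derive f x l -> is_derive f x l'.
Proof. now intros ->. Qed.

Lemma sumR_derive n (F : nat -> R -> R) (dF : nat -> R) x :
  (forall i, (i < n)%nat -> is_derive (F i) x (dF i)) ->
  is_derive (fun a => sumR n (fun i => F i a)) x (sumR n dF).
Proof.
  induction n as [|n IH]; intros H.
  - exact (is_derive_const (K:=R_AbsRing) (V:=R_NormedModule) 0 x).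
  - assert (H1 : is_derive (F n) x (dF n)) by (apply H; auto).
    assert (H2 : is_derive (fun a => sumR n (fun i => F i a)) x (sumR n dF))
      by (apply IH; intros i Hi; apply H; auto).
    exact (is_derive_plus (K:=R_AbsRing) (V:=R_NormedModule) _ _ x _ _ H2 H1).
Qed.

Lemma sumR_cont n (F : nat -> R -> R) x :
  (forall i, (i < n)%nat -> continuity_pt (F i) x) ->
  continuity_pt (fun a => sumR n (fun i => F i a)) x.
Proof.
  induction n as [|n IH]; intros H.
  - apply continuity_pt_const. intros u v. reflexivity.
  - assert (H1 : continuity_pt (F n) x) by (apply H; auto).
    assert (H2 : continuity_pt (fun a => sumR n (fun i => F i a)) x)
      by (apply IH; intros i Hi; apply H; auto).
    exact (continuity_pt_plus _ _ x H2 H1).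
Qed.

Lemma hhw_derive w a : 0 <= w <= 1 -> 0 < a < 1 ->
  is_derive (fun t => hh (t * w)) a (w * DD (a * w)).
Proof.
  intros Hw Ha. destruct (Req_dec w 0) as [->|Hw0].
  - apply is_derive_val with 0. ring.
    apply is_derive_ext with (f := fun _ => hh 0).
    { intros t. now rewrite Rmult_0_r. }
    exact (is_derive_const (K:=R_AbsRing) (V:=R_NormedModule) (hh 0) a).
  - assert (Hd : is_derive hh (a * w) (DD (a * w))) by (apply hh_derive; split; nra).
    assert (Hl : is_derive (fun t => t * w) a w).
    { auto_derive. auto. ring. }
    exact (is_derive_comp hh (fun t => t * w) a _ _ Hd Hl).
Qed.

Lemma hhw_cont w a : 0 <= w <= 1 -> 0 <= a < 1 -> continuity_pt (fun t => hh (t * w)) a.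
Proof.
  intros Hw Ha.
  apply (continuity_pt_comp (fun t => t * w) hh).
  - apply cpt_of_exd. auto_derive. auto.
  - apply hh_cont. split; nra.
Qed.

Lemma DD0 : DD 0 = 0.
Proof.
  unfold DD. rewrite Rminus_0_r, sqrt_1.
  replace ((1 + 1) / 2) with 1 by field. replace ((1 - 1) / 2) with 0 by field.
  rewrite ln_1, ln_nonpos by lra. unfold Rdiv. ring.
Qed.

Lemma yDD y : 0 <= y < 1 -> y * DD y = VV y / (2 * ln 2).
Proof.
  intros Hy. pose proof ln2_pos.
  assert (0 < sqrt (1 - y)) by (apply sqrt_lt_R0; lra).
  unfold DD, VV. field. split; lra.
Qed.

Definition Phi n (p w : nat -> R) wb a := hh (a * wb) - sumR n (fun i => p i * hh (a * w i)).
Definition dPhi n (p w : nat -> R) wb a :=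
  wb * DD (a * wb) - sumR n (fun i => p i * (w i * DD (a * w i))).

Lemma dPhi_nonneg n p w wb a :
  (forall i, (i < n)%nat -> 0 < p i) -> sumR n p = 1 ->
  (forall i, (i < n)%nat -> 0 <= w i <= 1) -> 0 <= wb <= 1 ->
  sumR n (fun i => p i * w i) <= wb -> 0 <= a < 1 -> 0 <= dPhi n p w wb a.
Proof.
  intros Hp Hs Hw Hwb Hm Ha. unfold dPhi.
  destruct (Req_dec a 0) as [->|Ha0].
  - rewrite Rmult_0_l, DD0.
    rewrite (sumR_ext n _ (fun i => p i * (0 + 0 * w i))).
    + rewrite sumR_aff. lra.
    + intros i Hi. rewrite Rmult_0_l, DD0. ring.
  - assert (Hpos : 0 < a) by lra. pose proof ln2_pos.
    assert (K : a * (wb * DD (a * wb) - sumR n (fun i => p i * (w i * DD (a * w i))))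
      = (VV (a * wb) - sumR n (fun i => p i * VV (a * w i))) / (2 * ln 2)).
    { rewrite Rmult_minus_distr_l, sumR_scal.
      rewrite (sumR_ext n _ (fun i => / (2 * ln 2) * (p i * VV (a * w i)))).
      - rewrite <- sumR_scal.
        replace (a * (wb * DD (a * wb))) with ((a * wb) * DD (a * wb)) by ring.
        rewrite yDD by (split; nra). field. lra.
      - intros i Hi. specialize (Hw i Hi).
        replace (a * (p i * (w i * DD (a * w i)))) with (p i * ((a * w i) * DD (a * w i))) by ring.
        rewrite yDD by (split; nra). field. lra. }
    assert (J : sumR n (fun i => p i * VV (a * w i)) <= VV (a * wb)).
    { apply VV_jensen.
      - intros i Hi. specialize (Hp i Hi). lra.
      - exact Hs.
      - intros i Hi. specialize (Hw i Hi). split; nra.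
      - rewrite (sumR_ext n _ (fun i => a * (p i * w i))).
        + rewrite <- sumR_scal. apply Rmult_le_compat_l; lra.
        + intros i Hi. ring.
      - nra. }
    assert (0 <= a * (wb * DD (a * wb) - sumR n (fun i => p i * (w i * DD (a * w i))))).
    { rewrite K. apply Rle_mult_inv_pos; lra. }
    nra.
Qed.

Lemma Phi_mono n p w wb a1 a2 :
  (forall i, (i < n)%nat -> 0 < p i) -> sumR n p = 1 ->
  (forall i, (i < n)%nat -> 0 <= w i <= 1) -> 0 <= wb <= 1 ->
  sumR n (fun i => p i * w i) <= wb -> 0 <= a1 -> a1 <= a2 -> a2 < 1 ->
  Phi n p w wb a1 <= Phi n p w wb a2.
Proof.
  intros Hp Hs Hw Hwb Hm H1 H12 H2.
  destruct (MVT_gen (Phi n p w wb) a1 a2 (dPhi n p w wb)) as [c [Hc Heq]].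
  - rewrite Rmin_left, Rmax_right by lra. intros x Hx.
    unfold Phi, dPhi.
    apply (is_derive_minus (K:=R_AbsRing) (V:=R_NormedModule)).
    + apply hhw_derive; lra.
    + apply (sumR_derive n (fun i a => p i * hh (a * w i))).
      intros i Hi. apply is_derive_scal. apply hhw_derive; [apply Hw; auto|lra].
  - rewrite Rmin_left, Rmax_right by lra. intros x Hx. unfold Phi.
    apply (continuity_pt_minus (fun t => hh (t * wb))).
    + apply hhw_cont; lra.
    + apply (sumR_cont n (fun i a => p i * hh (a * w i))).
      intros i Hi. apply (continuity_pt_mult (fun _ => p i)).
      * apply continuity_pt_const. intros u v; reflexivity.
      * apply hhw_cont; [apply Hw; auto|lra].
  - rewrite Rmin_left, Rmax_right in Hc by lra.
    assert (0 <= dPhi n p w wb c) by (apply dPhi_nonneg; auto; lra).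
    nra.
Qed.

Lemma exp_le_mono x y : x <= y -> exp x <= exp y.
Proof.
  intros H. destruct (Req_dec x y) as [->|Hn]. lra.
  left. apply exp_increasing. lra.
Qed.

Lemma HB_arg Delta g x :
  H_B (Ia_arg Delta g x) = hh ((1 - exp (- g ^ 2 / Delta ^ 2)) * (1 - x ^ 2)).
Proof.
  unfold hh, Ia_arg. do 4 f_equal. ring.
Qed.

Theorem theorem1 (n : nat) (p c : nat -> R) (Delta : R) :
  (forall i, (i < n)%nat -> 0 < p i) ->
  sumR n p = 1 ->
  (forall i, (i < n)%nat -> -1 <= c i <= 1) ->
  0 < Delta ->
  forall g1 g2 : R, 0 <= g1 -> g1 <= g2 ->
    Ia n p c Delta g1 <= Ia n p c Delta g2.
Proof.
  intros Hp Hs Hc HD g1 g2 Hg1 Hg12.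
  set (cb := sumR n (fun i => p i * c i)).
  set (wb := 1 - cb ^ 2).
  set (w := fun i => 1 - c i ^ 2).
  set (a := fun g => 1 - exp (- g ^ 2 / Delta ^ 2)).
  assert (HIa : forall g, Ia n p c Delta g = Phi n p w wb (a g)).
  { intros g. unfold Ia, Phi. fold cb. rewrite HB_arg. f_equal.
    apply sumR_ext. intros i Hi. now rewrite HB_arg. }
  rewrite !HIa.
  assert (Hcb : -1 <= cb <= 1).
  { split.
    - apply Rle_trans with (sumR n (fun i => p i * (-1 + 0 * c i))).
      + rewrite sumR_aff. lra.
      + apply sumR_le. intros i Hi. specialize (Hp i Hi). specialize (Hc i Hi). nra.
    - apply Rle_trans with (sumR n (fun i => p i * (1 + 0 * c i))).
      + apply sumR_le. intros i Hi. specialize (Hp i Hi). specialize (Hc i Hi). nra.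
      + rewrite sumR_aff. lra. }
  assert (HD2 : 0 < Delta ^ 2) by (apply pow_lt; lra).
  assert (Ha : forall g, 0 <= a g < 1).
  { intros g. unfold a. pose proof (exp_pos (- g ^ 2 / Delta ^ 2)).
    assert (- g ^ 2 / Delta ^ 2 <= 0).
    { unfold Rdiv. assert (0 <= g ^ 2 * / Delta ^ 2).
      { apply Rmult_le_pos. apply pow2_ge_0. left; apply Rinv_0_lt_compat; lra. }
      lra. }
    pose proof (exp_le_mono _ _ H0). rewrite exp_0 in H1. lra. }
  apply Phi_mono.
  - exact Hp.
  - exact Hs.
  - intros i Hi. specialize (Hc i Hi). unfold w. split; nra.
  - unfold wb. split; nra.
  - apply Rle_trans with (sumR n (fun i => p i * ((1 + cb ^ 2) + (-2 * cb) * c i))).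
    + apply sumR_le. intros i Hi. specialize (Hp i Hi). unfold w.
      apply Rmult_le_compat_l. lra. pose proof (pow2_ge_0 (c i - cb)). nra.
    + rewrite sumR_aff, Hs. fold cb. unfold wb. lra.
  - apply Ha.
  - unfold a. apply Rplus_le_compat_l, Ropp_le_contravar, exp_le_mono.
    unfold Rdiv. apply Rmult_le_compat_r. left; apply Rinv_0_lt_compat; lra.
    nra.
  - apply Ha.
Qed.
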